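(* Let $W:A^{\mathbb{Z}}\times\mathcal{B}^{\mathbb{Z}}\to\mathbb{C}$ be a cq-channel and $K:\mathcal{B}^{\mathbb{Z}}\to B(A^{\mathbb{Z}},\Sigma_c)$, $(K(b))(x)=W(x,b)$, the associated map. (a) The following are equivalent: (1) $K(\mathcal{B}^{\mathbb{Z}})\subseteq C(A^{\mathbb{Z}})$; (2) for each $b\in\mathcal{B}^{\mathbb{Z}}$, $\lim_{n\to\infty}\sup_{x,y\in A^{\mathbb{Z}}:\,x_{-n}^{n}=y_{-n}^{n}}|W(x,b)-W(y,b)|=0$. (b) If $W$ has decaying input memory and anticipation (DIMA), then $K(\mathcal{B}^{\mathbb{Z}})\subseteq C(A^{\mathbb{Z}})$.
   Context: $A$ finite, $\mathcal{B}=\mathcal{L}(\mathcal{H})$ with $\mathcal{H}$ finite-dimensional, $\mathcal{B}^{\mathbb{Z}}$ the quasi-local $C^*$-algebra (norm completion of the union of $\mathcal{B}^{[n,m]}=\bigotimes_{i=n}^m\mathcal{B}$ with natural embeddings). $\Sigma_c$ is the Borel (= cylinder) $\sigma$-field of $A^{\mathbb{Z}}$ with product topology, $B(A^{\mathbb{Z}},\Sigma_c)$ bounded Borel functions, $C(A^{\mathbb{Z}})$ continuous functions. $x_{n}^{m}=(x_n,\dots,x_m)$. A cq-channel is $W:A^{\mathbb{Z}}\times\mathcal{B}^{\mathbb{Z}}\to\mathbb{C}$ with $x\mapsto W(x,b)$ Borel measurable and $b\mapsto W(x,b)$ a state. $W$ is DIMA if for every $\varepsilon>0$ there are nonnegative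 integers $m(\varepsilon),a(\varepsilon)$ such that for all $n\in\mathbb{Z}$, $k\in\mathbb{N}$, all $b\in\mathcal{B}^{[n,n+k]}$ with $0\le b\le\mathbf{1}$, and all $m\ge m(\varepsilon)$, $a\ge a(\varepsilon)$: $|W(x,b)-W(x',b)|\le\varepsilon$ whenever $x_i=x'_i$ for $n-m\le i\le n+k+a$. *)

(* Defs.v *)
From HB Require Import structures.
From mathcomp Require Import all_boot all_order all_algebra.
From mathcomp Require Import all_classical all_reals all_analysis.
From mathcomp Require Import complex mxtens.
Import Order.TTheory GRing.Theory Num.Theory.
Import numFieldNormedType.Exports.

Set Implicit Arguments.
Unset Strict Implicit.
Unset Printing Implicit Defensive.

Local Open Scope ring_scope.
Local Open Scope classical_set_scope.

(** The complex numbers over a real type, packaged as a numClosedFieldType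
    (so that the normed/topological structure of MathComp-Analysis applies). *)
Definition Cx (R : realType) : numClosedFieldType := R[i].

Definition cabs (R : realType) (z : Cx R) : R := ComplexField.Normc.normc (z : R[i]).

Notation confs A := {ptws int -> discrete_topology A}.

Definition mxadj (R : realType) m (M : 'M[Cx R]_m) : 'M[Cx R]_m :=
  map_mx (fun z => Num.conj z) M^T.

(** B^[n, n+k] (k+1 sites, each with L(H), H = C^d) is
    identified with 'M_(d ^ k.+1) (Kronecker product of the site algebras,
    leftmost site = leftmost tensor factor).
    [ext_right M] : B^[n,n+k] -> B^[n,n+k+1],   M |-> M (x) 1
    [ext_left  M] : B^[n,n+k] -> B^[n-1,n+k],   M |-> 1 (x) M               *)
Definition ext_right (R : realType) (d k : nat) (M : 'M[Cx R]_(d ^ k.+1))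
  : 'M[Cx R]_(d ^ k.+2) :=
  castmx (esym (expnSr d k.+1), esym (expnSr d k.+1))
         (M *t (1%:M : 'M[Cx R]_d)).

Definition ext_left (R : realType) (d k : nat) (M : 'M[Cx R]_(d ^ k.+1))
  : 'M[Cx R]_(d ^ k.+2) :=
  castmx (esym (expnS d k.+1), esym (expnS d k.+1))
         ((1%:M : 'M[Cx R]_d) *t M).

(** The quasi-local C*-algebra B^Z, B = L(H), dim H = d, given through its
    defining (universal) data: a unital C*-algebra together with compatible
    injective unital *-homomorphisms  qla_loc n k : B^[n,n+k] -> B^Z
    (compatible with the natural embeddings B^[n,m] -> B^[n',m']) whose
    images have dense union.  This characterizes the C*-inductive limit
    (norm completion of the union of the local algebras) up to isometric
    *-isomorphism. *)
Unset Implicit Arguments.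
Record quasi_local_algebra (R : realType) (d : nat) := QuasiLocal {
  qla_car :> algType (Cx R);
  qla_star : qla_car -> qla_car;
  qla_norm : qla_car -> R;
  qla_loc : int -> forall k : nat, 'M[Cx R]_(d ^ k.+1) -> qla_car;
  qla_starD : forall x y, qla_star (x + y) = qla_star x + qla_star y;
  qla_starZ : forall (a : Cx R) x, qla_star (a *: x) = Num.conj a *: qla_star x;
  qla_starM : forall x y, qla_star (x * y) = qla_star y * qla_star x;
  qla_starK : forall x, qla_star (qla_star x) = x;
  qla_norm_ge0 : forall x, 0 <= qla_norm x;
  qla_norm_eq0 : forall x, qla_norm x = 0 -> x = 0;
  qla_normD : forall x y, qla_norm (x + y) <= qla_norm x + qla_norm y;
  qla_normZ : forall (a : Cx R) x, qla_norm (a *: x) = cabs a * qla_norm x;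
  qla_normM : forall x y, qla_norm (x * y) <= qla_norm x * qla_norm y;
  qla_Cstar : forall x, qla_norm (qla_star x * x) = qla_norm x ^+ 2;
  qla_complete : forall u : nat -> qla_car,
    (forall e : R, 0 < e -> exists N : nat, forall p q : nat,
        (N <= p)%N -> (N <= q)%N -> qla_norm (u p - u q) < e) ->
    exists l : qla_car, forall e : R, 0 < e -> exists N : nat, forall p : nat,
        (N <= p)%N -> qla_norm (u p - l) < e;
  qla_loc_lin : forall n k (a : Cx R) (M N : 'M[Cx R]_(d ^ k.+1)),
    qla_loc n k (a *: M + N) = a *: qla_loc n k M + qla_loc n k N;
  qla_loc_mul : forall n k (M N : 'M[Cx R]_(d ^ k.+1)),
    qla_loc n k (M *m N) = qla_loc n k M * qla_loc n k N;
  qla_loc_one : forall n k, qla_loc n k 1%:M = 1;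
  qla_loc_adj : forall n k (M : 'M[Cx R]_(d ^ k.+1)),
    qla_loc n k (mxadj M) = qla_star (qla_loc n k M);
  qla_loc_inj : forall n k, injective (qla_loc n k);
  qla_loc_right : forall n k (M : 'M[Cx R]_(d ^ k.+1)),
    qla_loc n k M = qla_loc n k.+1 (ext_right M);
  qla_loc_left : forall n k (M : 'M[Cx R]_(d ^ k.+1)),
    qla_loc n k M = qla_loc (n - 1) k.+1 (ext_left M);
  qla_dense : forall (x : qla_car) (e : R), 0 < e ->
    exists n k (M : 'M[Cx R]_(d ^ k.+1)), qla_norm (x - qla_loc n k M) < e
}.
Set Implicit Arguments.
Arguments qla_car {R d}.
Arguments qla_star {R d}.
Arguments qla_norm {R d}.
Arguments qla_loc {R d}.

Section Defs.
Variables (R : realType) (d : nat) (B : quasi_local_algebra R d) (A : finType).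

Definition is_local (n : int) (k : nat) (b : B) :=
  exists M : 'M[Cx R]_(d ^ k.+1), b = qla_loc B n k M.

Definition qla_pos (b : B) := exists c : B, b = qla_star B c * c.

Definition is_state (phi : B -> Cx R) :=
  [/\ forall (a : Cx R) (x y : B), phi (a *: x + y) = a * phi x + phi y,
      forall c : B, 0 <= phi (qla_star B c * c)
    & phi 1 = 1].

Definition borel_conf : set (set (confs A)) := <<s open >>.

Definition borel_measurable (f : confs A -> Cx R) :=
  forall U : set (Cx R), <<s open >> U -> borel_conf (f @^-1` U).

Definition cq_channel (W : confs A -> B -> Cx R) :=
  (forall b : B, borel_measurable (fun x => W x b)) /\
  (forall x : confs A, is_state (W x)).

Definition K (W : confs A -> B -> Cx R) (b : B) : confs A -> Cx R :=
  fun x => W x b.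

Definition osc (W : confs A -> B -> Cx R) (b : B) (n : nat) : R :=
  sup [set r : R | exists x y : confs A,
        (forall i : int, - (n%:Z) <= i <= n%:Z -> x i = y i) /\
        r = cabs (W x b - W y b)].

Definition DIMA (W : confs A -> B -> Cx R) :=
  forall e : R, 0 < e -> exists m0 a0 : nat,
    forall (n : int) (k : nat) (b : B),
      is_local n k b -> qla_pos b -> qla_pos (1 - b) ->
      forall m a : nat, (m0 <= m)%N -> (a0 <= a)%N ->
      forall x x' : confs A,
        (forall i : int, n - m%:Z <= i <= n + k%:Z + a%:Z -> x i = x' i) ->
        cabs (W x b - W x' b) <= e.

End Defs.

(* Main.v *)
Require Import Defs.
From HB Require Import structures.
From mathcomp Require Import all_boot all_order all_algebra.
From mathcomp Require Import all_classical all_reals all_analysis.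
From mathcomp Require Import complex mxtens.
From mathcomp Require Import zify ring lra.
Import Order.TTheory GRing.Theory Num.Theory.
Import numFieldNormedType.Exports.
Local Open Scope ring_scope.
Local Open Scope classical_set_scope.

Lemma st1 {R : realType} {d : nat} (B : quasi_local_algebra R d) :
  qla_star B 1 = 1.
Proof. by have := qla_starM _ _ B (qla_star B 1) 1; rewrite mulr1 !qla_starK mulr1 => /esym. Qed.

Lemma st0 {R : realType} {d : nat} (B : quasi_local_algebra R d) :
  qla_star B 0 = 0.
Proof. by rewrite -(scale0r (0:B)) qla_starZ rmorph0 !scale0r. Qed.

Lemma stN {R : realType} {d : nat} (B : quasi_local_algebra R d) (x : B) :
  qla_star B (- x) = - qla_star B x.
Proof. by rewrite -scaleN1r qla_starZ rmorphN1 scaleN1r. Qed.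

Lemma stB {R : realType} {d : nat} (B : quasi_local_algebra R d) (x y : B) :
  qla_star B (x - y) = qla_star B x - qla_star B y.
Proof. by rewrite qla_starD stN. Qed.

Lemma cabs0 {R : realType} : cabs (0 : Cx R) = 0.
Proof. exact: Normc.normc0. Qed.

Lemma cabsR {R : realType} (r : R) : cabs ((r%:C)%C : Cx R) = `|r|.
Proof. by rewrite /cabs /= expr0n /= addr0 sqrtr_sqr. Qed.

Lemma cabsN1 {R : realType} : cabs (-1 : Cx R) = 1.
Proof. by rewrite /cabs normcN Normc.normc1. Qed.

Lemma nm0 {R : realType} {d : nat} (B : quasi_local_algebra R d) :
  qla_norm B 0 = 0.
Proof. by rewrite -(scale0r (0:B)) qla_normZ cabs0 mul0r. Qed.

Lemma nmN {R : realType} {d : nat} (B : quasi_local_algebra R d) (x : B) :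
  qla_norm B (- x) = qla_norm B x.
Proof. by rewrite -scaleN1r qla_normZ cabsN1 mul1r. Qed.

Lemma nmZR {R : realType} {d : nat} (B : quasi_local_algebra R d) (r : R) (x : B) :
  qla_norm B ((r%:C)%C *: x) = `|r| * qla_norm B x.
Proof. by rewrite qla_normZ cabsR. Qed.

Lemma nmB {R : realType} {d : nat} (B : quasi_local_algebra R d) (x y : B) :
  qla_norm B (x - y) <= qla_norm B x + qla_norm B y.
Proof. by rewrite -(nmN B y) qla_normD. Qed.

Lemma nm_le_st {R : realType} {d : nat} (B : quasi_local_algebra R d) (x : B) :
  qla_norm B x <= qla_norm B (qla_star B x).
Proof.
have h1 := qla_Cstar _ _ B x; have h2 := qla_normM _ _ B (qla_star B x) x.
have h3 := qla_norm_ge0 _ _ B x; have h4 := qla_norm_ge0 _ _ B (qla_star B x).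
rewrite h1 in h2. nra.
Qed.

Lemma nm_st {R : realType} {d : nat} (B : quasi_local_algebra R d) (x : B) :
  qla_norm B (qla_star B x) = qla_norm B x.
Proof.
apply/le_anti/andP; split; last exact: nm_le_st.
by have := nm_le_st B (qla_star B x); rewrite qla_starK.
Qed.

Lemma nm1 {R : realType} {d : nat} (B : quasi_local_algebra R d) :
  qla_norm B 1 <= 1.
Proof.
have := qla_Cstar _ _ B 1; rewrite st1 mul1r => h.
have := qla_norm_ge0 _ _ B 1. nra.
Qed.


Lemma phiD {R : realType} {d : nat} {B : quasi_local_algebra R d} {phi : B -> Cx R}
  (hs : is_state phi) (x y : B) : phi (x + y) = phi x + phi y.
Proof. by case: hs => L _ _; rewrite -{1}[x]scale1r L mul1r. Qed.

Lemma phi0 {R : realType} {d : nat} {B : quasi_local_algebra R d} {phi : B -> Cx R}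
  (hs : is_state phi) : phi 0 = 0.
Proof.
have := phiD hs 0 0; rewrite addr0 => h.
by apply: (addrI (phi 0)); rewrite addr0 -h.
Qed.

Lemma phiZ {R : realType} {d : nat} {B : quasi_local_algebra R d} {phi : B -> Cx R}
  (hs : is_state phi) (a : Cx R) (x : B) : phi (a *: x) = a * phi x.
Proof. by have [L _ _] := hs; have := L a x 0; rewrite !addr0 (phi0 hs) addr0. Qed.

Lemma phiN {R : realType} {d : nat} {B : quasi_local_algebra R d} {phi : B -> Cx R}
  (hs : is_state phi) (x : B) : phi (- x) = - phi x.
Proof. by rewrite -scaleN1r (phiZ hs) mulN1r. Qed.

Lemma phiB {R : realType} {d : nat} {B : quasi_local_algebra R d} {phi : B -> Cx R}
  (hs : is_state phi) (x y : B) : phi (x - y) = phi x - phi y.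
Proof. by rewrite (phiD hs) (phiN hs). Qed.

Lemma phi1 {R : realType} {d : nat} {B : quasi_local_algebra R d} {phi : B -> Cx R}
  (hs : is_state phi) : phi 1 = 1.
Proof. by case: hs. Qed.

Lemma phi_pos {R : realType} {d : nat} {B : quasi_local_algebra R d} {phi : B -> Cx R}
  (hs : is_state phi) (c : B) : 0 <= phi (qla_star B c * c).
Proof. by case: hs. Qed.

Lemma pos_conj {R : realType} {z : Cx R} : 0 <= z -> z^* = z.
Proof. by move=> /ger0_real /conj_Creal. Qed.

Lemma phi_st {R : realType} {d : nat} {B : quasi_local_algebra R d} {phi : B -> Cx R}
  (hs : is_state phi) (b : B) : phi (qla_star B b) = (phi b)^*.
Proof.
set p := phi b; set q := phi (qla_star B b); set s := phi (qla_star B b * b).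
have rs : s^* = s by apply: pos_conj; exact: phi_pos.
have E1 : qla_star B (1 + b) * (1 + b) = 1 + b + qla_star B b + qla_star B b * b.
  by rewrite qla_starD st1 mulrDl !mulrDr !mul1r mulr1 !addrA.
have r1 := pos_conj (phi_pos hs (1 + b)).
rewrite E1 !(phiD hs) (phi1 hs) -/p -/q -/s !rmorphD /= rs conjC1 in r1.
have E2 : qla_star B (1 + 'i *: b) * (1 + 'i *: b) =
   1 + 'i *: b - 'i *: qla_star B b + qla_star B b * b.
  rewrite qla_starD st1 qla_starZ conjCi mulrDl !mulrDr !mul1r mulr1.
  by rewrite -scalerAl -scalerAr scalerA mulNr -expr2 sqrCi opprK scale1r scaleNr !addrA.
have r2 := pos_conj (phi_pos hs (1 + 'i *: b)).
rewrite E2 (phiD hs) (phiB hs) (phiD hs) !(phiZ hs) (phi1 hs) -/p -/q -/s in r2.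
rewrite !rmorphD ?rmorphN !rmorphM /= rs conjC1 conjCi in r2.
have i2 : 'i * 'i = -1 :> Cx R by rewrite -expr2 sqrCi.
have h2 : 2 != 0 :> Cx R by rewrite pnatr_eq0.
clearbody p q s.
have H1 : p^* + q^* = p + q.
  by move: r1; rewrite -!addrA => /addrI; rewrite !addrA => /addIr.
have H2 : q^* - p^* = p - q.
  have : 'i * (q^* - p^* - (p - q)) = 0.
    have -> : 'i * (q^* - p^* - (p - q)) = (1 + - 'i * p^* - - 'i * q^* + s) - (1 + 'i * p - 'i * q + s) by ring.
    by rewrite r2 subrr.
  move/eqP; rewrite mulf_eq0 (negbTE (@neq0Ci (Cx R))) /= subr_eq0 => /eqP //.
have H3 : q^* = p.
  apply: (mulfI h2).
  have -> : 2 * q^* = (p^* + q^*) + (q^* - p^*) by ring.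
  by rewrite H1 H2; ring.
by rewrite -H3 conjCK.
Qed.

Lemma phi_CS {R : realType} {d : nat} {B : quasi_local_algebra R d} {phi : B -> Cx R}
  (hs : is_state phi) (b : B) : `|phi b| ^+ 2 <= phi (qla_star B b * b).
Proof.
set l := phi b.
have E : qla_star B (b - l *: 1) * (b - l *: 1) =
   qla_star B b * b - l *: qla_star B b - l^* *: b + (l^* * l) *: 1.
  rewrite stB qla_starZ st1 mulrBl !mulrBr -!scalerAl -!scalerAr !mulr1 !mul1r.
  by rewrite scalerA opprB !addrA addrAC.
have := phi_pos hs (b - l *: 1).
rewrite E (phiD hs) !(phiB hs) !(phiZ hs) (phi1 hs) (phi_st hs) -/l mulr1.
rewrite normCK.
have -> : phi (qla_star B b * b) - l * l^* - l^* * l + l^* * l =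
  phi (qla_star B b * b) - l * l^* by ring.
by rewrite subr_ge0.
Qed.

Lemma geom_small {R : realType} {e : R} : 0 < e -> exists N : nat, (2^-1 : R) ^+ N < e.
Proof.
move=> e0; exists (Num.Def.archi_bound e^-1).
have h1 : e^-1 < (Num.Def.archi_bound e^-1)%:R by apply: archi_boundP; rewrite invr_ge0 ltW.
set N := Num.Def.archi_bound e^-1 in h1 *.
have h2 : (N%:R : R) <= 2 ^+ N.
  by rewrite -natrX ler_nat; apply: ltnW; apply: ltn_expl.
rewrite exprVn invf_plt ?posrE ?exprn_gt0 //.
exact: lt_le_trans h1 h2.
Qed.

Lemma nm_small {R : realType} {d : nat} {B : quasi_local_algebra R d} (z : B) :
  (forall e : R, 0 < e -> qla_norm B z <= e) -> z = 0.
Proof.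
move=> H; apply: qla_norm_eq0.
have h0 := qla_norm_ge0 _ _ B z.
apply/eqP; rewrite eq_le h0 andbT leNgt; apply/negP => hp.
have := H _ (divr_gt0 hp (ltr0n _ 2)). lra.
Qed.

Lemma half_key {R : realType} {d : nat} {B : quasi_local_algebra R d} (x a b : B) :
  qla_norm B (((2^-1 : R)%:C)%C *: (x + a * a) - ((2^-1 : R)%:C)%C *: (x + b * b))
  <= 2^-1 * (qla_norm B a * qla_norm B (a - b) + qla_norm B (a - b) * qla_norm B b).
Proof.
rewrite -scalerBr nmZR ger0_norm ?invr_ge0 ?ler0n //.
have -> : x + a * a - (x + b * b) = a * (a - b) + (a - b) * b.
  by rewrite (addrC x) addrKA mulrBr mulrBl addrA subrK.
apply: ler_wpM2l; first by rewrite invr_ge0 ler0n.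
apply: le_trans (qla_normD _ _ B _ _) _.
by apply: lerD; apply: qla_normM.
Qed.

Lemma sqrt_pos {R : realType} {d : nat} {B : quasi_local_algebra R d} {x : B} :
  qla_star B x = x -> qla_norm B x <= 3/4 -> qla_pos (1 - x).
Proof.
move=> sx nx.
set h : Cx R := ((2^-1 : R)%:C)%C.
pose y := fix y (n : nat) : B := if n is n'.+1 then h *: (x + y n' * y n') else 0.
have y0 : y 0%N = 0 by [].
have yS n : y n.+1 = h *: (x + y n * y n) by [].
have ny n : qla_norm B (y n) <= 2^-1.
  elim: n => [|n IH]; first by rewrite y0 nm0 invr_ge0 ler0n.
  rewrite yS nmZR ger0_norm ?invr_ge0 ?ler0n //.
  have h1 := qla_normD _ _ B x (y n * y n).
  have h2 := qla_normM _ _ B (y n) (y n).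
  have h3 := qla_norm_ge0 _ _ B (y n).
  have h4 := qla_norm_ge0 _ _ B (y n * y n).
  nra.
have sy n : qla_star B (y n) = y n.
  elim: n => [|n IH]; first by rewrite y0 st0.
  have hc : h^* = h by exact: conjc_real.
  by rewrite yS qla_starZ hc qla_starD sx qla_starM IH.
have dy n : qla_norm B (y n.+1 - y n) <= (2^-1) ^+ n.+1.
  elim: n => [|n IH].
    by rewrite y0 subr0 expr1.
  have := half_key x (y n.+1) (y n); rewrite -/h -(yS n.+1) -(yS n) => H.
  have h1 := ny n.+1; have h2 := ny n; rewrite exprS.
  have h3 := qla_norm_ge0 _ _ B (y n); have h4 := qla_norm_ge0 _ _ B (y n.+1).
  have h5 := qla_norm_ge0 _ _ B (y n.+1 - y n).
  set P := (2^-1 : R) ^+ n.+1 in IH *.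
  nra.
have cy p m : qla_norm B (y (p + m)%N - y p) <= (2^-1) ^+ p - (2^-1) ^+ (p + m).
  elim: m => [|m IH]; first by rewrite addn0 !subrr nm0.
  have E : y (p + m.+1)%N - y p = (y (p + m).+1 - y (p + m)%N) + (y (p + m)%N - y p).
    by rewrite addnS addrA subrK.
  rewrite E; apply: le_trans (qla_normD _ _ B _ _) _.
  have := dy (p + m)%N; rewrite exprS => H.
  rewrite addnS exprS.
  set Q := (2^-1 : R) ^+ (p + m) in IH H *.
  lra.
have cauchy : forall e : R, 0 < e -> exists N : nat, forall p q : nat,
    (N <= p)%N -> (N <= q)%N -> qla_norm B (y p - y q) < e.
  move=> e e0; have [N HN] := geom_small e0; exists N.
  have gen p q : (N <= p)%N -> (p <= q)%N -> qla_norm B (y q - y p) < e.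
    move=> Np pq; rewrite -(subnKC pq).
    apply: le_lt_trans (cy p (q - p)%N) _.
    have h1 : (2^-1 : R) ^+ p <= (2^-1) ^+ N.
      by apply: ler_wiXn2l => //; rewrite ?invr_ge0 ?ler0n ?invf_le1 ?ler1n.
    have h2 : 0 <= (2^-1 : R) ^+ (p + (q - p)) by apply: exprn_ge0; rewrite invr_ge0 ler0n.
    lra.
  move=> p q Np Nq; have [pq|qp] := leqP p q.
    by rewrite -opprB nmN; apply: gen.
  by apply: gen => //; apply: ltnW.
have [l hl] := qla_complete _ _ B y cauchy.
have El : l = h *: (x + l * l).
  apply/eqP; rewrite -subr_eq0; apply/eqP; apply: nm_small => e e0.
  have [N1 HN1] := hl (e / 8) (divr_gt0 e0 (ltr0n _ 8)).
  have [N2 HN2] := hl 1 ltr01.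
  set p := maxn N1 N2.
  have d1 := HN1 p.+1 (leq_trans (leq_maxl N1 N2) (leqnSn _)).
  have d2 := HN1 p (leq_maxl N1 N2).
  have d3 := HN2 p (leq_maxr N1 N2).
  have E : l - h *: (x + l * l) = - (y p.+1 - l) + (h *: (x + y p * y p) - h *: (x + l * l)).
    rewrite yS opprB addrA subrK. reflexivity.
  rewrite E; apply: le_trans (qla_normD _ _ B _ _) _; rewrite nmN.
  have K := half_key x (y p) l; rewrite -/h in K.
  have nl : qla_norm B l <= qla_norm B (y p - l) + qla_norm B (y p).
    by have := qla_normD _ _ B (- (y p - l)) (y p); rewrite nmN opprB subrK.
  have h1 := ny p; have h3 := qla_norm_ge0 _ _ B (y p);
  have h4 := qla_norm_ge0 _ _ B l; have h5 := qla_norm_ge0 _ _ B (y p - l).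
  have h6 := qla_norm_ge0 _ _ B (y p.+1 - l).
  nra.
have sl : qla_star B l = l.
  apply/eqP; rewrite -subr_eq0; apply/eqP; apply: nm_small => e e0.
  have [N HN] := hl (e / 2) (divr_gt0 e0 (ltr0n _ 2)).
  have d1 := HN N (leqnn N).
  have E : qla_star B l - l = - qla_star B (y N - l) + (y N - l).
    by rewrite stB sy opprB addrA subrK.
  rewrite E; apply: le_trans (qla_normD _ _ B _ _) _; rewrite nmN nm_st.
  lra.
exists (1 - l).
have hh : 2 * h = 1.
  by rewrite /h fmorphV /= rmorph_nat mulfV // pnatr_eq0.
have Ex : x = l *+ 2 - l * l.
  by rewrite -scaler_nat {1}El scalerA hh scale1r addrK.
rewrite stB st1 sl Ex mulrBl mul1r !mulrBr mulr1.
by rewrite !opprB mulr2n opprD !addrA addrAC.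
Qed.
Lemma state_bound {R : realType} {d : nat} {B : quasi_local_algebra R d} {phi : B -> Cx R}
  (hs : is_state phi) (b : B) : cabs (phi b) <= 2 * qla_norm B b.
Proof.
have nb0 := qla_norm_ge0 _ _ B b.
have [nbz|nbp] := eqVneq (qla_norm B b) 0.
  by rewrite nbz mulr0 (qla_norm_eq0 _ _ B b nbz) (phi0 hs) cabs0.
have nbpos : 0 < qla_norm B b by rewrite lt_def nbp nb0.
set t := qla_norm B (qla_star B b * b).
have ht : t = qla_norm B b ^+ 2 by rewrite /t qla_Cstar.
have tpos : 0 < t by rewrite ht exprn_gt0.
set a : R := 3 / 4 / t.
have apos : 0 < a by rewrite /a divr_gt0 // divr_gt0.
set x := ((a%:C)%C : Cx R) *: (qla_star B b * b).
have hat : a * t = 3 / 4 by rewrite /a divfK // gt_eqF.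
have sx : qla_star B x = x.
  have hc : ((a%:C)%C : Cx R)^* = (a%:C)%C by exact: conjc_real.
  by rewrite /x qla_starZ hc qla_starM qla_starK.
have nx : qla_norm B x <= 3 / 4.
  by rewrite /x nmZR -/t (ger0_norm (ltW apos)) hat.
have [c hc] := sqrt_pos sx nx.
have := phi_pos hs c; rewrite -hc (phiB hs) (phi1 hs) /x (phiZ hs) subr_ge0 => e2.
have e1 := phi_CS hs b.
set r := cabs (phi b).
have hr : `|phi b| = (r%:C)%C by [].
rewrite hr in e1.
have e3 : ((a * r ^+ 2)%:C)%C <= 1 :> Cx R.
  rewrite rmorphM rmorphXn /=; apply: le_trans e2.
  by apply: ler_wpM2l => //; rewrite ler0c ltW.
have e4 : a * r ^+ 2 <= 1 by rewrite -lecR rmorph1.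
have r0 : 0 <= r by have := normr_ge0 (phi b); rewrite hr ler0c.
have e5 : 3 / 4 * r ^+ 2 <= t.
  by have := ler_wpM2l (ltW tpos) e4; rewrite mulr1 mulrA (mulrC t) hat.
rewrite ht in e5.
nra.
Qed.



Definition cyl {A : finType} (x : confs A) (N : nat) : set (confs A) :=
  [set y | forall i : int, - (N%:Z) <= i <= N%:Z -> x i = y i].


Lemma coord_nbhs {A : finType} (x : confs A) (i : int) : nbhs x [set y : confs A | x i = y i].
Proof.
have H := @proj_continuous int (fun _ => discrete_topology A) i x.
have H3 := (@discrete_set1 (discrete_topology A) (x i)).
have H4 := H [set x i] H3.
have E : [set y : confs A | x i = y i] = proj i @^-1` [set x i].
  by rewrite /proj; apply/seteqP; split => y /= ->.
rewrite E.
exact H4.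
Qed.

Lemma cyl_nbhs {A : finType} (x : confs A) N : nbhs x (cyl x N).
Proof.
elim: N => [|N IH].
  apply: filterS (coord_nbhs x 0) => y H i /andP [h1 h2].
  have -> : i = 0 by lia.
  exact: H.
apply: filterS (filterI IH (filterI (coord_nbhs x N.+1%:Z) (coord_nbhs x (- N.+1%:Z)))).
move=> y [H1 [H2 H3]] i /andP [h1 h2].
have [/eqP->//|ne1] := boolP (i == N.+1%:Z).
have [/eqP->//|ne2] := boolP (i == - N.+1%:Z).
apply: H1; apply/andP; split.
  lia.
lia.
Qed.

Lemma cyl_mono {A : finType} (x : confs A) M N : (M <= N)%N -> cyl x N `<=` cyl x M.
Proof. by move=> MN y H i Hi; apply: H; lia. Qed.

Lemma nbhs_cyl {A : finType} (x : confs A) U : nbhs x U -> exists N, cyl x N `<=` U.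
Proof.
set G := filter_from [set: nat] (cyl x).
have FG : Filter G.
  apply: filter_from_filter; first by exists 0%N.
  move=> i j _ _; exists (maxn i j) => //.
  by move=> y H; split; [apply: (cyl_mono _ _ _ (leq_maxl i j)) | apply: (cyl_mono _ _ _ (leq_maxr i j))].
suff : G --> x by move=> /(_ U) H /H [N _ HN]; exists N.
apply/cvg_sup => i V [W] [[Z] oZ <-] ZfN WV.
exists `|i|%N => //; move=> y Hy; apply: WV => /=.
by rewrite -(Hy i) //; lia.
Qed.

Lemma cyl_open {A : finType} (x : confs A) N : open (cyl x N).
Proof.
rewrite openE => y Hy.
apply: filterS (cyl_nbhs y N) => z Hz i Hi.
by rewrite Hy // Hz.
Qed.

Lemma confs_compact {A : finType} : compact [set: confs A].
Proof.
have H := @tychonoff int (fun _ => discrete_topology A) (fun _ => setT)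
  (fun _ => @finite_compact (discrete_topology A) setT (@finite_finset A setT)).
rewrite (_ : [set f | _] = setT) in H; last by apply/seteqP; split.
exact: H.
Qed.


Lemma cabs_norm {R : realType} (z : Cx R) : ((cabs z)%:C)%C = `|z|.
Proof. by []. Qed.

Lemma cabs_ge0 {R : realType} (z : Cx R) : 0 <= cabs z.
Proof. by rewrite -lecR cabs_norm normr_ge0. Qed.

Lemma cabsD {R : realType} (z w : Cx R) : cabs (z + w) <= cabs z + cabs w.
Proof. exact: le_normcD. Qed.

Lemma cabsN {R : realType} (z : Cx R) : cabs (- z) = cabs z.
Proof. exact: normcN. Qed.

Lemma cabsM {R : realType} (z w : Cx R) : cabs (z * w) = cabs z * cabs w.
Proof. exact: Normc.normcM. Qed.

Lemma cabsB {R : realType} (z w : Cx R) : cabs (z - w) <= cabs z + cabs w.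
Proof. by rewrite -(cabsN w) cabsD. Qed.

Lemma cont_crit {R : realType} {A : finType} (f : confs A -> Cx R) :
  (forall x (e : R), 0 < e -> exists N, forall y, cyl x N y -> cabs (f x - f y) <= e) ->
  continuous f.
Proof.
move=> H x.
have FF : Filter (nbhs x) := nbhs_pfilter x.
apply/(@cvgrPdist_lt _ _ _ (nbhs x) FF f (f x)) => eps eps0.
have := eps0; rewrite ltcE => /andP [/eqP hI hR].
have e0 : 0 < complex.Re eps / 2 := divr_gt0 hR (ltr0n _ 2).
have [N HN] := H x _ e0.
apply: filterS (cyl_nbhs x N) => y hy.
rewrite -cabs_norm ltcE /= hI eqxx /=.
apply: le_lt_trans (HN y hy) _.
by rewrite ltr_pdivrMr // ltr_pMr // ltr1n.
Qed.

Lemma cont_cyl {R : realType} {A : finType} {f : confs A -> Cx R} :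
  continuous f ->
  forall x (e : R), 0 < e -> exists N, forall y, cyl x N y -> cabs (f x - f y) < e.
Proof.
move=> hf x e e0.
have FF : Filter (nbhs x) := nbhs_pfilter x.
have hlt : 0 < (e%:C)%C :> Cx R by rewrite ltcR.
have := (@cvgrPdist_lt _ _ _ (nbhs x) FF f (f x)).1 (hf x) _ hlt.
move=> /nbhs_cyl [N HN]; exists N => y /HN /=.
by rewrite -cabs_norm ltcR.
Qed.

Lemma unif_cont {R : realType} {A : finType} (f : confs A -> Cx R) :
  continuous f ->
  forall e : R, 0 < e -> exists N, forall x y, cyl x N y -> cabs (f x - f y) <= e.
Proof.
move=> hf e e0.
apply: contrapT => Hn.
have wit N : exists xy : confs A * confs A,
    cyl xy.1 N xy.2 /\ e < cabs (f xy.1 - f xy.2).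
  apply: contrapT => H; apply: Hn; exists N => x y hxy.
  by rewrite leNgt; apply/negP => hlt; apply: H; exists (x, y).
pose xy N := projT1 (cid (wit N)).
have hxy N : cyl (xy N).1 N (xy N).2 /\ e < cabs (f (xy N).1 - f (xy N).2).
  exact: projT2 (cid (wit N)).
pose F := (fun N => (xy N).1) @ \oo.
have PF : ProperFilter F by exact: fmap_proper_filter.
have [z [_ cz]] := @confs_compact A F PF filterT.
have [K HK] := cont_cyl hf z _ (divr_gt0 e0 (ltr0n _ 2)).
have FA : F [set w | exists2 N, (K <= N)%N & w = (xy N).1].
  by exists K => // n /= hn; exists n.
have [w [[N KN ->] hw]] := cz _ _ FA (cyl_nbhs z K).
have hw2 : cyl z K (xy N).2.
  move=> i hi; rewrite (hw i hi).
  exact: (cyl_mono _ _ _ KN _ (hxy N).1 i hi).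
have h1 := HK _ hw; have h2 := HK _ hw2.
have h3 := (hxy N).2.
have : cabs (f (xy N).1 - f (xy N).2) <= cabs (f z - f (xy N).1) + cabs (f z - f (xy N).2).
  have -> : f (xy N).1 - f (xy N).2 = - (f z - f (xy N).1) + (f z - f (xy N).2).
    by rewrite opprB addrA subrK.
  by apply: le_trans (cabsD _ _) _; rewrite cabsN.
lra.
Qed.


Definition pc {R : realType} {d : nat} (B : quasi_local_algebra R d) (n : int) (k : nat) (u : B) :=
  [/\ is_local n k u, qla_pos u & qla_pos (1 - u)].

Lemma loc0 {R : realType} {d : nat} (B : quasi_local_algebra R d) n k :
  qla_loc B n k 0 = 0.
Proof.
have := qla_loc_lin _ _ B n k 1 0 0; rewrite !scale1r addr0 => h.
by apply: (addrI (qla_loc B n k 0)); rewrite addr0 -h.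
Qed.

Lemma is_local_lin {R : realType} {d : nat} {B : quasi_local_algebra R d} n k (a : Cx R) (u v : B) :
  is_local n k u -> is_local n k v -> is_local n k (a *: u + v).
Proof. by move=> [M ->] [N ->]; exists (a *: M + N); rewrite qla_loc_lin. Qed.

Lemma is_local1 {R : realType} {d : nat} (B : quasi_local_algebra R d) n k :
  is_local n k (1 : B).
Proof. by exists 1%:M; rewrite qla_loc_one. Qed.

Lemma is_local0 {R : realType} {d : nat} (B : quasi_local_algebra R d) n k :
  is_local n k (0 : B).
Proof. by exists 0; rewrite loc0. Qed.

Lemma is_local_st {R : realType} {d : nat} {B : quasi_local_algebra R d} n k (u : B) :
  is_local n k u -> is_local n k (qla_star B u).
Proof. by move=> [M ->]; exists (mxadj M); rewrite qla_loc_adj. Qed.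

Lemma is_localZ {R : realType} {d : nat} {B : quasi_local_algebra R d} n k (a : Cx R) (u : B) :
  is_local n k u -> is_local n k (a *: u).
Proof. by move=> hu; rewrite -[_ *: _]addr0; apply: is_local_lin => //; exact: is_local0. Qed.

Lemma is_localD {R : realType} {d : nat} {B : quasi_local_algebra R d} n k (u v : B) :
  is_local n k u -> is_local n k v -> is_local n k (u + v).
Proof. by move=> hu hv; rewrite -[u]scale1r; apply: is_local_lin. Qed.

Lemma is_localB {R : realType} {d : nat} {B : quasi_local_algebra R d} n k (u v : B) :
  is_local n k u -> is_local n k v -> is_local n k (u - v).
Proof. by move=> hu hv; rewrite -scaleN1r; apply: is_localD => //; apply: is_localZ. Qed.

Lemma pc_of {R : realType} {d : nat} {B : quasi_local_algebra R d} n k (u : B) :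
  is_local n k u -> qla_star B u = u -> qla_norm B u <= 3/4 -> qla_norm B (1 - u) <= 3/4 ->
  pc B n k u.
Proof.
move=> lu su h1 h2; split => //; last exact: sqrt_pos su h1.
have s1u : qla_star B (1 - u) = 1 - u by rewrite stB st1 su.
by have := sqrt_pos s1u h2; rewrite subKr.
Qed.

Lemma one_sub_half {R : realType} : 1 - ((2^-1 : R)%:C)%C = ((2^-1 : R)%:C)%C :> Cx R.
Proof.
have -> : 1 = ((1 : R)%:C)%C :> Cx R by [].
rewrite -rmorphB; congr (_%:C)%C.
lra.
Qed.

Lemma nm_half1 {R : realType} {d : nat} (B : quasi_local_algebra R d) :
  qla_norm B (((2^-1 : R)%:C)%C *: 1) <= 2^-1.
Proof.
rewrite nmZR ger0_norm ?invr_ge0 ?ler0n //.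
have := nm1 B; have := qla_norm_ge0 _ _ B 1. lra.
Qed.

Lemma hc_real {R : realType} (r : R) : (((r%:C)%C : Cx R))^* = (r%:C)%C.
Proof. exact: conjc_real. Qed.

Lemma sa_bound {R : realType} {d : nat} {B : quasi_local_algebra R d} n k (s : B) :
  is_local n k s -> qla_star B s = s ->
  exists C : R, 0 <= C /\ forall phi psi : B -> Cx R, is_state phi -> is_state psi ->
   forall e : R, (forall u, pc B n k u -> cabs (phi u - psi u) <= e) ->
   cabs (phi s - psi s) <= C * e.
Proof.
move=> ls ss.
set h : Cx R := ((2^-1 : R)%:C)%C.
have ns0 := qla_norm_ge0 _ _ B s.
set t : R := (4 * (qla_norm B s + 1))^-1.
have tpos : 0 < t by rewrite /t invr_gt0 mulr_gt0 // ltr_wpDl.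
have ht : t * (4 * (qla_norm B s + 1)) = 1 by rewrite /t mulVf // gt_eqF // mulr_gt0 // ltr_wpDl.
have tns : t * qla_norm B s <= 4^-1 by nra.
have nts : qla_norm B (((t%:C)%C : Cx R) *: s) <= 4^-1.
  by rewrite nmZR (ger0_norm (ltW tpos)).
have nh := nm_half1 B; rewrite -/h in nh.
set u := h *: 1 + ((t%:C)%C : Cx R) *: s.
have pu : pc B n k u.
  apply: pc_of.
  - by apply: is_localD; apply: is_localZ => //; exact: is_local1.
  - by rewrite /u qla_starD !qla_starZ !hc_real st1 ss.
  - apply: le_trans (qla_normD _ _ B _ _) _; lra.
  - have -> : 1 - u = h *: 1 - ((t%:C)%C : Cx R) *: s.
      by rewrite /u opprD addrA -{1}(scale1r (1 : B)) -scalerBl one_sub_half.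
    apply: le_trans (nmB _ _ _) _; lra.
have pu0 : pc B n k (h *: 1).
  apply: pc_of.
  - by apply: is_localZ; exact: is_local1.
  - by rewrite qla_starZ hc_real st1.
  - lra.
  - rewrite -{1}(scale1r (1 : B)) -scalerBl one_sub_half; lra.
have Es : s = ((t^-1%:C)%C : Cx R) *: (u - h *: 1).
  rewrite /u (addrC (h *: 1)) addrK scalerA -rmorphM /= mulVf ?gt_eqF //.
  by rewrite scale1r.
exists (2 * t^-1); split; first by rewrite mulr_ge0 // invr_ge0 ltW.
move=> phi psi hphi hpsi e He.
have E : phi s - psi s = ((t^-1%:C)%C : Cx R) * ((phi u - psi u) - (phi (h *: 1) - psi (h *: 1))).
  by rewrite Es !(phiZ hphi) !(phiZ hpsi) !(phiB hphi) !(phiB hpsi) !(phiZ hphi) !(phiZ hpsi); ring.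
have tip : 0 < t^-1 by rewrite invr_gt0.
rewrite E cabsM cabsR (ger0_norm (ltW tip)).
have := He _ pu; have := He _ pu0.
have := cabsB (phi u - psi u) (phi (h *: 1) - psi (h *: 1)).
nra.
Qed.

Lemma cabsi {R : realType} : cabs ('i : Cx R) = 1.
Proof. by apply: complexI; rewrite cabs_norm normCi. Qed.

Lemma loc_bound {R : realType} {d : nat} {B : quasi_local_algebra R d} n k (b : B) :
  is_local n k b ->
  exists C : R, 0 <= C /\ forall phi psi : B -> Cx R, is_state phi -> is_state psi ->
   forall e : R, (forall u, pc B n k u -> cabs (phi u - psi u) <= e) ->
   cabs (phi b - psi b) <= C * e.
Proof.
move=> lb.
set h : Cx R := ((2^-1 : R)%:C)%C.
have hc : h^* = h by exact: hc_real.
set s1 := h *: (b + qla_star B b).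
set s2 := (- 'i * h) *: (b - qla_star B b).
have l1 : is_local n k s1 by apply: is_localZ; apply: is_localD => //; exact: is_local_st.
have l2 : is_local n k s2 by apply: is_localZ; apply: is_localB => //; exact: is_local_st.
have ss1 : qla_star B s1 = s1.
  by rewrite /s1 qla_starZ hc qla_starD qla_starK addrC.
have ss2 : qla_star B s2 = s2.
  rewrite /s2 qla_starZ stB qla_starK rmorphM rmorphN /= conjCi hc opprK.
  by rewrite -opprB scalerN -scaleNr mulNr.
have hh : h + h = 1.
  rewrite /h -rmorphD /=.
  have -> : (2^-1 : R) + 2^-1 = 1 by field.
  by [].
have Eb : b = s1 + 'i *: s2.
  rewrite /s1 /s2 scalerA mulrA mulrN -expr2 sqrCi opprK mul1r -scalerDr.
  by rewrite addrACA subrr addr0 scalerDr -scalerDl hh scale1r.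
have [C1 [C10 H1]] := sa_bound _ _ _ l1 ss1.
have [C2 [C20 H2]] := sa_bound _ _ _ l2 ss2.
exists (C1 + C2); split; first by rewrite addr_ge0.
move=> phi psi hphi hpsi e He.
have E : phi b - psi b = (phi s1 - psi s1) + 'i * (phi s2 - psi s2).
  by rewrite {1 2}Eb !(phiD hphi) !(phiD hpsi) !(phiZ hphi) !(phiZ hpsi); ring.
rewrite E; apply: le_trans (cabsD _ _) _.
rewrite cabsM cabsi mul1r mulrDl.
by apply: lerD; [apply: H1 | apply: H2].
Qed.


Theorem lemma3 (R : realType) (A : finType) (d : nat)
    (B : quasi_local_algebra R d) (W : confs A -> B -> Cx R) :
  cq_channel W ->
  ((forall b : B, continuous (K W b)) <->
     (forall b : B, osc W b n @[n --> \oo] --> (0 : R))) /\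
  (DIMA W -> forall b : B, continuous (K W b)).
Proof.
move=> [_ hW].
have bnd b x y : cabs (W x b - W y b) <= 4 * qla_norm B b.
  apply: le_trans (cabsB _ _) _.
  have := state_bound (hW x) b; have := state_bound (hW y) b. lra.
split; [split|].
- move=> hc b.
  apply/cvgrPdist_lt => e e0.
  have [N HN] := unif_cont _ (hc b) _ (divr_gt0 e0 (ltr0n _ 2)).
  exists N => // n /= Nn.
  rewrite /osc.
  set S := [set r : R | _].
  have ub : forall r, S r -> r <= e / 2.
    move=> r [x [y [hxy ->]]]; exact: (HN x y (cyl_mono _ _ _ Nn _ hxy)).
  have [[r Sr]|Sn] := pselect (exists r, S r).
    have hs : has_sup S by split; [exists r | exists (e / 2)].
    have h1 := sup_upper_bound hs Sr.
    have h2 : sup S <= e / 2 := ge_sup (ex_intro _ r Sr) ub.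
    have r0 : 0 <= r by case: Sr => x [y [_ ->]]; exact: cabs_ge0.
    rewrite sub0r normrN ger0_norm; [lra|lra].
  have -> : S = set0 by apply/seteqP; split => // r Sr; apply: Sn; exists r.
  by rewrite sup0 subrr normr0.
- move=> ho b; apply: cont_crit => x e e0.
  have := ho b; move/cvgrPdist_lt => /(_ e e0) [N _ HN].
  exists N => y hy.
  have := HN N (leqnn N); rewrite /= /osc.
  set S := [set r : R | _].
  have Sr : S (cabs (W x b - W y b)) by exists x, y.
  have hs : has_sup S.
    split; first by exists (cabs (W x b - W y b)).
    by exists (4 * qla_norm B b) => r [x' [y' [_ ->]]]; exact: bnd.
  have h1 := sup_upper_bound hs Sr.
  rewrite sub0r normrN => h.
  have := ler_norm (sup S).
  rewrite /K. lra.
- move=> hd b; apply: cont_crit => x e e0.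
  have [n [k [M hM]]] := qla_dense _ _ B b (e / 8) (divr_gt0 e0 (ltr0n _ 8)).
  set b0 := qla_loc B n k M in hM.
  have lb0 : is_local n k b0 by exists M.
  have [C [C0 HC]] := loc_bound _ _ _ lb0.
  have C1 : 0 < 4 * (C + 1) by rewrite mulr_gt0 // ltr_wpDl.
  have e'0 : 0 < e / (4 * (C + 1)) by rewrite divr_gt0.
  have [m0 [a0 Hd]] := hd _ e'0.
  exists (addn (absz (n - m0%:Z)) (absz (n + k%:Z + a0%:Z))) => y hy.
  have Hu : forall u, pc B n k u -> cabs (W x u - W y u) <= e / (4 * (C + 1)).
    move=> u [lu pu pu'].
    apply: (Hd n k u lu pu pu' m0 a0 (leqnn _) (leqnn _) x y).
    by move=> i hi; apply: hy; lia.
  have H0 := HC (W x) (W y) (hW x) (hW y) _ Hu.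
  have HCe : C * (e / (4 * (C + 1))) <= e / 4.
    have h1 : C * (e / (4 * (C + 1))) <= (C + 1) * (e / (4 * (C + 1))).
      by apply: ler_wpM2r; [exact: ltW | lra].
    have h2 : (C + 1) * (e / (4 * (C + 1))) = e / 4.
      by field; rewrite gt_eqF // ltr_wpDl.
    by rewrite -h2.
  have E : W x b - W y b = W x (b - b0) + (W x b0 - W y b0) - W y (b - b0).
    by rewrite (phiB (hW x)) (phiB (hW y)); ring.
  have nb : qla_norm B (b - b0) < e / 8 := hM.
  have s1 := state_bound (hW x) (b - b0).
  have s2 := state_bound (hW y) (b - b0).
  rewrite /K E.
  apply: le_trans (cabsB _ _) _.
  have := cabsD (W x (b - b0)) (W x b0 - W y b0).
  lra.
Qed.
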